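(* Let $I=[r,s]$ and let $C$ be an $I$-vertex-stable strongly connected component with $|C|\ge 2$ and $D(C)<\infty$. Let $x$ be the maximal round in $[r,s]$ with $x+D^x(C)-1\le s$. Then (i) for every $x'\in[r,x]$ it holds that $x'+D^{x'}(C)-1\le s$ and $D^{x'}(C)\le D(C)$; and (ii) $x\ge\max\{s-|C|+2,\,r\}$.
   Context: A finite set $\Pi$ of $n\ge2$ processes is given together with an infinite sequence of simple directed graphs $\mathcal{G}^1,\mathcal{G}^2,\dots$ on vertex set $\Pi$ ($\mathcal{G}^t$ is the round-$t$ communication graph). Process $p$ causally influences $q$ in round $t$ if $q=p$ or $(p\to q)\in\mathcal{G}^t$. A causal chain of length $k\ge1$ from $p$ in round $t$ to $q$ is a sequence $p=p_0,\dots,p_k=q$ with $p_i$ causally influencing $p_{i+1}$ in round $t+i$ for $0\le i<k$; the causal distance $d_t(p,q)$ is the minimum length of such a chain ($\infty$ if none). For an interval $I=[r,s]$, a set $C\subseteq\Pi$ is an $I$-vertex-stable strongly connected component if for every $p\in C$ and every round $t\in I$, the vertex set of the strongly connected component of $\mathcal{G}^t$ containing $p$ equals $C$. Its round-$x$ causal diameter is $D^x(C)=\max_{p,q\in C} d_x(p,q)$, and its causal diameter is $D(C)=\max\{D^x(C): x\in[r,s],\ x+D^x(C)-1\le s\}$ if this set is nonempty, and $D(C)=\infty$ otherwise. *)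

(* Defs.v *)
From Stdlib Require Import ClassicalEpsilon.
From mathcomp Require Import all_boot.
Set Implicit Arguments. Unset Strict Implicit. Unset Printing Implicit Defensive.

(* A dynamic network: round-t communication graph  G t  on the finite
   process set T (rounds are t = 1, 2, ...; G 0 is irrelevant). *)
Definition dyn_graph (T : finType) := nat -> rel T.

Section Causal.
Variables (T : finType) (G : dyn_graph T).

Definition influences (t : nat) (p q : T) : bool := (q == p) || G t p q.

Fixpoint chain (t k : nat) (p q : T) : bool :=
  match k with
  | 0 => p == q
  | k'.+1 => [exists p' : T, influences t p p' && chain t.+1 k' p' q]
  end.

(* causal distance d_t(p,q): the minimal chain length k >= 1;
   None encodes infinity *)
Definition causal_dist (t : nat) (p q : T) : option nat :=
  match excluded_middle_informative (exists k, (0 < k) && chain t k p q) with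
  | left H => Some (ex_minn H)
  | right _ => None
  end.

Definition scc (t : nat) (p : T) : {set T} :=
  [set q | connect (G t) p q && connect (G t) q p].

Definition vertex_stable (r s : nat) (C : {set T}) : Prop :=
  forall p, p \in C -> forall t, r <= t <= s -> scc t p = C.

Definition diam_at (x : nat) (C : {set T}) : option nat :=
  if [forall p in C, forall q in C, causal_dist x p q != None]
  then Some (\max_(p in C) \max_(q in C) odflt 0 (causal_dist x p q))
  else None.

(* x + D^x(C) - 1 <= s (false if D^x(C) is infinite) *)
Definition fits (s x : nat) (C : {set T}) : bool :=
  if diam_at x C is Some d then x + d <= s.+1 else false.

Definition causal_diam (r s : nat) (C : {set T}) : option nat :=
  if has (fun x => fits s x C) (index_iota r s.+1)
  then Some (\max_(r <= x < s.+1 | fits s x C) odflt 0 (diam_at x C))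
  else None.

End Causal.

(* Main.v *)
Require Import Defs.
From mathcomp Require Import all_boot.
From mathcomp Require Import zify.
From Stdlib Require Import ClassicalEpsilon.
Set Implicit Arguments. Unset Strict Implicit.

Lemma minS (a b c k : nat) : minn k.+1 c <= a -> a < b -> minn k.+2 c <= b.
Proof. lia. Qed.

Lemma A1 (a k dx : nat) : 0<k -> k<=dx -> 0 < a + k <= a + dx.
Proof. move=> *; apply/andP; split; lia. Qed.
Lemma A2 (x x' d' dx s : nat) : x'<=x -> d' <= x-x'+dx -> x+dx <= s.+1 -> x'+d' <= s.+1.
Proof. lia. Qed.
Lemma A3 (r x x' s : nat) : r<=x' -> x'<=x -> x<=s -> r <= x' < s.+1.
Proof. move=> *; apply/andP; split; lia. Qed.
Lemma A4 (r s c j : nat) : r < s+2-c -> 2<=c -> j < c.-1 -> r <= s+2-c+j <= s.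
Proof. move=> *; apply/andP; split; lia. Qed.
Lemma A5 (c : nat) : 2<=c -> 0 < c.-1.
Proof. lia. Qed.
Lemma A6 (r s c d0 : nat) : r < s+2-c -> 2<=c -> d0 <= c.-1 -> s+2-c+d0 <= s.+1.
Proof. lia. Qed.
Lemma A7 (r s c : nat) : r < s+2-c -> 2 <= c -> r <= s+2-c <= s.
Proof. move=> *; apply/andP; split; lia. Qed.

Section H.
Variables (T : finType) (G : dyn_graph T).

Lemma chain_stay k : forall t (p : T), chain G t k p p.
Proof.
elim: k => [|k IH] t p /=; first by [].
apply/existsP; exists p; rewrite IH andbT /influences eqxx.
by [].
Qed.

Lemma chain_cat a b : forall t (p m q : T),
  chain G t a p m -> chain G (t + a) b m q -> chain G t (a + b) p q.
Proof.
elim: a => [|a IH] t p m q /=.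
  by move/eqP => ->; rewrite addn0.
case/existsP => p' /andP[h1 h2] h3; apply/existsP; exists p'.
rewrite h1 /=; apply: (IH _ _ m) => //.
by rewrite addSnnS.
Qed.

Lemma chain_S k t (p q : T) : chain G t k p q -> chain G t k.+1 p q.
Proof.
move=> h; rewrite -addn1; apply: (chain_cat h); exact: chain_stay.
Qed.

Lemma chain_edge k t (p u v : T) : chain G t k p u -> G (t + k) u v ->
  chain G t k.+1 p v.
Proof.
move=> h e; rewrite -addn1; apply: (chain_cat h) => /=.
apply/existsP; exists v; rewrite /influences e orbT /=.
by [].
Qed.

Lemma dist_le k t (p q : T) : 0 < k -> chain G t k p q ->
  exists m, causal_dist G t p q = Some m /\ 0 < m /\ m <= k /\ chain G t m p q.
Proof.
move=> k0 ch; rewrite /causal_dist.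
case: excluded_middle_informative => [H|H]; last first.
  by exfalso; apply: H; exists k; rewrite k0 ch.
case: ex_minnP => m /andP[m0 chm] hmin.
exists m; split=> //; split=> //; split=> //.
by apply: hmin; rewrite k0 ch.
Qed.

Lemma dist_some t (p q : T) m : causal_dist G t p q = Some m ->
  0 < m /\ chain G t m p q.
Proof.
rewrite /causal_dist.
case: excluded_middle_informative => [H|H] //.
case: ex_minnP => m' /andP[m0 chm] _ [<-].
by [].
Qed.

Lemma diam_bound t (C : {set T}) B :
  (forall p q, p \in C -> q \in C -> exists k, 0 < k <= B /\ chain G t k p q) ->
  exists d0, diam_at G t C = Some d0 /\ d0 <= B.
Proof.
move=> hC; rewrite /diam_at.
have hall : [forall p in C, forall q in C, causal_dist G t p q != None].
  apply/forallP => p; apply/implyP => pC; apply/forallP => q; apply/implyP => qC.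
  have [k [/andP[k0 kB] ch]] := hC p q pC qC.
  by have [m [-> _]] := dist_le k0 ch.
rewrite hall; eexists; split; first reflexivity.
apply/bigmax_leqP => p pC; apply/bigmax_leqP => q qC.
have [k [/andP[k0 kB] ch]] := hC p q pC qC.
have [m [-> [_ [mk _]]]] := dist_le k0 ch.
exact: leq_trans mk kB.
Qed.

Lemma diam_some t (C : {set T}) d0 : diam_at G t C = Some d0 ->
  forall p q, p \in C -> q \in C -> exists k, 0 < k <= d0 /\ chain G t k p q.
Proof.
rewrite /diam_at; case: ifP => // hall [<-] p q pC qC.
have := forallP hall p; rewrite pC /= => /forallP /(_ q); rewrite qC /=.
case E: (causal_dist G t p q) => [m|] // _.
have [m0 ch] := dist_some E.
exists m; split => //; rewrite m0 /=.
apply: leq_trans (leq_bigmax_cond _ pC).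
apply: leq_trans (leq_bigmax_cond _ qC).
by rewrite E.
Qed.

Lemma crossing (e : rel T) (S : {set T}) a b : connect e a b -> a \in S -> b \notin S ->
  exists u v, [/\ u \in S, v \notin S, e u v, connect e a v & connect e v b].
Proof.
case/connectP => s; elim: s a => [|y s IH] a /=.
  by move=> _ -> ->.
case/andP => eay py bE aS bS.
case: (boolP (y \in S)) => yS.
  have [u [v [uS vS euv cyv cvb]]] := IH y py bE yS bS.
  exists u, v; split => //; apply: connect_trans cyv; exact: connect1.
exists a, y; split => //; first exact: connect1.
by apply/connectP; exists s.
Qed.

Lemma growth r s (C : {set T}) p y : vertex_stable G r s C -> p \in C ->
  forall k, (forall j, j < k -> r <= y + j <= s) ->
  minn k.+1 #|C| <= #|[set q in C | chain G y k p q]|.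
Proof.
move=> vs pC; elim => [|k IH] hk.
  apply: leq_trans (geq_minl _ _) _.
  rewrite card_gt0; apply/set0Pn; exists p; rewrite inE pC /=.
  by [].
have IH' := IH (fun j hj => hk j (ltnW (leq_trans hj (leqnn k.+1)))).
set S := [set q in C | chain G y k p q] in IH'.
set S' := [set q in C | chain G y k.+1 p q].
have sub : S \subset S'.
  apply/subsetP => q; rewrite !inE => /andP[-> h] /=; exact: chain_S.
case: (boolP (C \subset S)) => CS.
  apply: leq_trans (geq_minr _ _) _; apply: subset_leq_card.
  exact: subset_trans CS sub.
have [q qC qS] : exists2 q, q \in C & q \notin S.
  case/subsetPn: CS => q qC qS; by exists q.
have rk := hk k (leqnn _).
have sc := vs p pC (y + k) rk.
have pS : p \in S by rewrite inE pC; exact: chain_stay.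
have : q \in scc G (y + k) p by rewrite sc.
rewrite inE => /andP[cpq cqp].
have [u [v [uS vS euv cpv cvq]]] := crossing cpq pS qS.
have vC : v \in C.
  rewrite -sc inE cpv /=; exact: connect_trans cvq cqp.
have vS' : v \in S'.
  rewrite inE vC /=; move: uS; rewrite inE => /andP[_ chu].
  exact: chain_edge chu euv.
have pr : S \proper S' by apply/properP; split => //; exists v.
have := proper_card pr.
exact: minS IH'.
Qed.

End H.

Theorem lemma3 (T : finType) (G : dyn_graph T) (r s : nat) (C : {set T})
  (x : nat) (d : nat) :
  2 <= #|T| ->
  (forall t, irreflexive (G t)) ->
  1 <= r ->
  vertex_stable G r s C ->
  2 <= #|C| ->
  causal_diam G r s C = Some d ->
  (* x is the maximal round in [r,s] with x + D^x(C) - 1 <= s *)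
  r <= x <= s -> fits G s x C ->
  (forall y, r <= y <= s -> fits G s y C -> y <= x) ->
  (forall x', r <= x' <= x ->
     exists d', diam_at G x' C = Some d' /\ x' + d' <= s.+1 /\ d' <= d)
  /\ maxn (s + 2 - #|C|) r <= x.
Proof.
move=> _ _ _ vs C2 hd /andP[rx xs] fx hmax; split.
  move=> x' /andP[rx' x'x].
  move: fx; rewrite /fits; case E: (diam_at G x C) => [dx|] // hx.
  have hd' := diam_some E.
  have [d' [E' d'B]] : exists d', diam_at G x' C = Some d' /\ d' <= x - x' + dx.
    apply: diam_bound => p q pC qC.
    have [k [/andP[k0 kd] ch]] := hd' p q pC qC.
    exists (x - x' + k); split; first exact: A1.
    apply: (chain_cat (chain_stay _ _ _ _)).
    by rewrite subnKC.
  exists d'; split => //; split; first exact: A2 x'x d'B hx.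
  move: hd; rewrite /causal_diam; case: ifP => // _ [<-].
  have fx' : fits G s x' C by rewrite /fits E'; exact: A2 x'x d'B hx.
  rewrite big_mkcond /=.
  apply: leq_trans (leq_bigmax_seq (F := fun i => if fits G s i C then odflt 0 (diam_at G i C) else 0) (P := xpredT) (r := index_iota r s.+1) x' _ _) => //.
    by rewrite fx' E'.
  by rewrite mem_index_iota; exact: A3 rx' x'x xs.
case: (leqP (s + 2 - #|C|) r) => hy.
  by [].
set y := s + 2 - #|C|.
have [p pC] : exists p, p \in C.
  have : 0 < #|C| by exact: leq_trans C2.
  by case/card_gt0P => p pC; exists p.
have fy : fits G s y C.
  have hall : forall q, q \in C -> forall p', p' \in C -> chain G y (#|C|.-1) p' q.
    move=> q qC p' p'C.
    have g := growth (y := y) vs p'C (k := #|C|.-1) (fun j hj => A4 hy C2 hj).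
    have eq : [set q0 in C | chain G y #|C|.-1 p' q0] = C.
      apply/eqP; rewrite eqEcard; apply/andP; split.
        by apply/subsetP => z; rewrite inE => /andP[].
      move: g; rewrite prednK; last exact: leq_trans C2.
      by rewrite minnn.
    by move: qC; rewrite -{1}eq inE => /andP[].
  have [d0 [E d0B]] : exists d0, diam_at G y C = Some d0 /\ d0 <= #|C|.-1.
    apply: diam_bound => p' q p'C qC; exists #|C|.-1; split; first by rewrite A5 // leqnn.
    exact: (hall q qC p' p'C).
  rewrite /fits E; exact: A6 hy C2 d0B.
exact: hmax (A7 hy C2) fy.
Qed.
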